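(* Let $p$ be a prime and $t$ a real number. If $X\subset\mathbb{R}^k$ is Euclidean sub-$p$-toral, then so is $X\times\{0,t\}\subset\mathbb{R}^{k+1}$.
   Context: A $p$-torus is a group isomorphic to $(\mathbb{Z}_p)^\alpha$ for some $\alpha\ge1$. A set $X\subset\mathbb{R}^k$ is Euclidean sub-$p$-toral if there exist $n\ge k$, a $p$-torus $G$ and an action of $G$ on $\mathbb{R}^n$ by isometries such that $X$ (viewed in $\mathbb{R}^n$ via the standard inclusion $\mathbb{R}^k\subset\mathbb{R}^n$) is contained in a single $G$-orbit. *)

(* Defs.v *)
From HB Require Import structures.
From mathcomp Require Import all_boot all_order all_algebra all_fingroup.
From mathcomp Require Import reals.
Set Implicit Arguments. Unset Strict Implicit. Unset Printing Implicit Defensive.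
Import Order.TTheory GRing.Theory Num.Theory.
Local Open Scope ring_scope.

Definition Zp_pow (p alpha : nat) := {ffun 'I_alpha -> 'Z_p}.

Definition p_torus (p : nat) (gT : finGroupType) (G : {group gT}) : Prop :=
  exists alpha : nat, (1 <= alpha)%N /\
  exists f : Zp_pow p alpha -> gT,
    injective f /\
    [set f a | a in [set: Zp_pow p alpha]] = G :> {set gT} /\
    (forall a b : Zp_pow p alpha, f (a + b) = (f a * f b)%g).

Definition edist (R : realType) (n : nat) (x y : 'rV[R]_n) : R :=
  Num.sqrt (\sum_(i < n) (x 0 i - y 0 i) ^+ 2).

Definition isometry (R : realType) (n : nat) (f : 'rV[R]_n -> 'rV[R]_n) : Prop :=
  forall x y, edist (f x) (f y) = edist x y.

Definition isometric_action (R : realType) (n : nat) (gT : finGroupType)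
  (G : {group gT}) (act : gT -> 'rV[R]_n -> 'rV[R]_n) : Prop :=
  (forall x, act 1%g x = x) /\
  (forall g h, g \in G -> h \in G -> forall x, act (g * h)%g x = act g (act h x)) /\
  (forall g, g \in G -> isometry (act g)).

(* Standard inclusion R^k -> R^n (k <= n): pad with zeros. *)
Definition std_incl (R : realType) (k n : nat) (x : 'rV[R]_k) : 'rV[R]_n :=
  \row_(i < n) oapp (fun j : 'I_k => x 0 j) 0 (insub (val i)).

Definition euclidean_sub_p_toral (R : realType) (p k : nat) (X : 'rV[R]_k -> Prop) : Prop :=
  exists n : nat, (k <= n)%N /\
  exists (gT : finGroupType) (G : {group gT}), p_torus p G /\
  exists act : gT -> 'rV[R]_n -> 'rV[R]_n, isometric_action G act /\
  exists x0 : 'rV[R]_n, forall x, X x -> exists2 g, g \in G & std_incl n x = act g x0.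

Definition times_0t (R : realType) (k : nat) (X : 'rV[R]_k -> Prop) (t : R)
  : 'rV[R]_(k + 1) -> Prop :=
  fun y => exists (x : 'rV[R]_k) (c : R), X x /\ (c = 0 \/ c = t) /\
    y = row_mx x (\row_(j < 1) c).

(* Main.v *)
Require Import Defs.
From mathcomp Require Import all_boot all_order all_algebra all_fingroup.
From mathcomp Require Import reals.
From mathcomp Require Import complex zify ring.
Import Order.TTheory GRing.Theory Num.Theory.
Set Implicit Arguments. Unset Strict Implicit. Unset Printing Implicit Defensive.
Local Open Scope ring_scope.

Definition at_ (R : realType) (n : nat) (v : 'rV[R]_n) (j : nat) : R :=
  oapp (fun i : 'I_n => v 0 i) 0 (insub j).

Lemma at_in (R : realType) n (v : 'rV[R]_n) (i : 'I_n) : at_ v i = v 0 i.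
Proof. by rewrite /at_ valK. Qed.

Lemma at_out (R : realType) n (v : 'rV[R]_n) j : (n <= j)%N -> at_ v j = 0.
Proof. by move=> h; rewrite /at_ insubN // -leqNgt. Qed.

Lemma at_row (R : realType) n (F : nat -> R) j :
  at_ (\row_(i < n) F i) j = if (j < n)%N then F j else 0.
Proof.
case: ltnP => h; last by rewrite at_out.
by rewrite (at_in _ (Ordinal h)) mxE.
Qed.

Lemma row_at (R : realType) n (u v : 'rV[R]_n) :
  (forall j, (j < n)%N -> at_ u j = at_ v j) -> u = v.
Proof.
move=> h; apply/rowP => i; rewrite -!at_in; exact: h.
Qed.

Lemma std_inclE (R : realType) k n (x : 'rV[R]_k) :
  std_incl n x = \row_(i < n) at_ x i.
Proof. by []. Qed.

Lemma row_mx_at (R : realType) k (x : 'rV[R]_k) (c : R) j :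
  at_ (row_mx x (\row_(i < 1) c)) j =
  if (j < k)%N then at_ x j else if j == k then c else 0.
Proof.
case: (ltnP j (k + 1)) => h; last first.
  by rewrite at_out // ifF ?ifF //; lia.
rewrite (at_in _ (Ordinal h)) mxE; case: splitP => /= [a ->|a ->].
  by rewrite ltn_ord at_in.
by rewrite ord1 mxE addn0 ltnn eqxx.
Qed.

Local Open Scope complex_scope.

Definition oF (R : realType) (n k : nat) (y : 'rV[R]_(n.+2)) (i : nat) : R :=
  if (i < k)%N then at_ y i else at_ y i.+1.
Definition oP (R : realType) (n k : nat) (y : 'rV[R]_(n.+2)) : 'rV[R]_n :=
  \row_(i < n) oF k y i.

Definition zP (R : realType) (n k : nat) (y : 'rV[R]_(n.+2)) : R[i] :=
  at_ y k +i* at_ y n.+1.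

Definition rF (R : realType) (n k : nat) (v : 'rV[R]_n) (z : R[i]) (j : nat) : R :=
  if (j < k)%N then at_ v j else if j == k then complex.Re z
  else if (j <= n)%N then at_ v j.-1 else complex.Im z.
Definition rP (R : realType) (n k : nat) (v : 'rV[R]_n) (z : R[i]) : 'rV[R]_(n.+2) :=
  \row_(j < n.+2) rF k v z j.

Ltac crush := repeat (case: ifP => ?); rewrite ?eqxx //=; try (exfalso; lia); try (congr at_; lia).

Lemma oP_rP (R : realType) n k (v : 'rV[R]_n) z : (k <= n)%N -> oP k (rP k v z) = v.
Proof.
move=> kn; apply: row_at => j jn; rewrite /oP at_row jn /oF /rP !at_row /rF.
crush.
Qed.

Lemma zP_rP (R : realType) n k (v : 'rV[R]_n) z : (k <= n)%N -> zP k (rP k v z) = z.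
Proof.
move=> kn; rewrite /zP !at_row /rF.
case: z => a b; crush.
Qed.

Lemma rP_oP (R : realType) n k (y : 'rV[R]_(n.+2)) : (k <= n)%N -> rP k (oP k y) (zP k y) = y.
Proof.
move=> kn; apply: row_at => j jn; rewrite at_row jn /rF /zP /= /oP !at_row /oF.
crush.
Qed.

Definition Ssq (R : realType) N (u v : 'rV[R]_N) : R := \sum_(i < N) (u 0 i - v 0 i) ^+ 2.

Lemma SsqE (R : realType) N (u v : 'rV[R]_N) :
  Ssq u v = \sum_(0 <= j < N) (at_ u j - at_ v j) ^+ 2.
Proof. by rewrite big_mkord; apply: eq_bigr => i _; rewrite !at_in. Qed.

Lemma Ssq_split (R : realType) n k (y y' : 'rV[R]_(n.+2)) : (k <= n)%N ->
  Ssq y y' = Ssq (oP k y) (oP k y') + (at_ y k - at_ y' k) ^+ 2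
             + (at_ y n.+1 - at_ y' n.+1) ^+ 2.
Proof.
move=> kn; rewrite !SsqE big_nat_recr //= (@big_cat_nat _ _ _ k) //=; last by lia.
rewrite (@big_ltn _ _ _ k) ?ltnS // big_add1 /=.
rewrite (@big_cat_nat _ _ _ k 0 n) //=.
congr (_ + _); rewrite addrAC -addrA; congr (_ + _).
  rewrite big_nat [RHS]big_nat; apply: eq_bigr => j /andP [_ jk]; rewrite /oP !at_row /oF jk.
  have jn : (j < n)%N by lia.
  by rewrite jn.
congr (_ + _).
rewrite big_nat [RHS]big_nat; apply: eq_bigr => j /andP [kj jn]; by rewrite /oP !at_row /oF jn ltnNge kj.
Qed.
Lemma zeta_ex (R : realType) (p : nat) : (1 < p)%N ->
  exists z : R[i], z ^+ p = 1 /\ z != 1.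
Proof.
move=> p1.
have /closed_rootP [z rz] : size (\poly_(i < p) (1 : R[i])) != 1%N.
  by rewrite size_poly_eq ?oner_eq0 //; case: p p1 => [|[]].
exists z; move: rz; rewrite /root horner_poly => /eqP s0.
have s1 : \sum_(i < p) z ^+ i = 0.
  by rewrite -[RHS]s0; apply: eq_bigr => i _; rewrite mul1r.
split.
  by apply/eqP; rewrite -subr_eq0 subrX1 s1 mulr0.
apply/eqP => z1; move: s1; rewrite z1.
under eq_bigr do rewrite expr1n.
rewrite sumr_const card_ord => /eqP; rewrite pnatr_eq0; by case: (p) p1.
Qed.

Notation nc := (@Normc.normc _).

Lemma ncX (R : realType) (z : R[i]) h : nc (z ^+ h) = nc z ^+ h.
Proof.
elim: h => [|h IH]; first by rewrite !expr0 Normc.normc1.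
by rewrite !exprS Normc.normcM IH.
Qed.

Lemma nc_ge0 (R : realType) (z : R[i]) : 0 <= nc z.
Proof. by case: z => a b; rewrite /Normc.normc sqrtr_ge0. Qed.

Lemma Ssq_ge0 (R : realType) N (u v : 'rV[R]_N) : 0 <= Ssq u v.
Proof. by apply: sumr_ge0 => i _; rewrite sqr_ge0. Qed.

Lemma Ssq_split' (R : realType) n k (y y' : 'rV[R]_(n.+2)) : (k <= n)%N ->
  Ssq y y' = Ssq (oP k y) (oP k y') + (nc (zP k y - zP k y')) ^+ 2.
Proof.
move=> kn; rewrite (Ssq_split _ _ kn) -addrA; congr (_ + _).
by rewrite /zP /= sqr_sqrtr // addr_ge0 // sqr_ge0.
Qed.

Lemma edist_Ssq (R : realType) N (u v : 'rV[R]_N) : edist u v = Num.sqrt (Ssq u v).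
Proof. by []. Qed.

Lemma edist_eq_Ssq (R : realType) N (u v u' v' : 'rV[R]_N) :
  edist u v = edist u' v' -> Ssq u v = Ssq u' v'.
Proof.
rewrite !edist_Ssq => /eqP; rewrite eqr_sqrt ?Ssq_ge0 //; exact/eqP.
Qed.


Lemma incl_rP (R : realType) n k (x : 'rV[R]_k) (c : R) : (k <= n)%N ->
  std_incl n.+2 (row_mx x (\row_(i < 1) c)) = rP k (std_incl n x) (c%:C)%C.
Proof.
move=> kn; apply: row_at => j jn; rewrite std_inclE /rP !at_row jn row_mx_at /rF std_inclE !at_row.
crush.
all: try (rewrite at_out //; lia).
Qed.

Local Close Scope complex_scope.
Unset Implicit Arguments.

Theorem lemma3 (R : realType) (p : nat) (t : R) (k : nat) (X : 'rV[R]_k -> Prop) :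
  prime p -> euclidean_sub_p_toral p X -> euclidean_sub_p_toral p (times_0t X t).
Proof.
move=> pp [n [kn [gT [G [[al [al1 [f [finj [fim fhom]]]]] [act [[a1 [aM aiso]] [x0 hx0]]]]]]]].
have p1 := prime_gt1 pp.
have [z [zp z1]] := zeta_ex R p1.
have nz : nc z = 1.
  apply/eqP; rewrite -(pexpr_eq1 (n:=p)) ?nc_ge0 1?ltnW //.
  by rewrite -ncX zp Normc.normc1.
have z1' : 1 - z != 0 by rewrite subr_eq0 eq_sym.
pose cc : R[i] := (t%:C)%C / (1 - z).
pose rot (h : nat) (w : R[i]) := cc + z ^+ h * (w - cc).
pose act' (gh : (gT * 'Z_p)%type) (y : 'rV[R]_(n.+2)) :=
  rP k (act gh.1 (oP k y)) (rot (val gh.2) (zP k y)).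
exists n.+2; split; first by rewrite addn1; lia.
exists (gT * 'Z_p)%type, (setX_group G [set: 'Z_p]%G); split.
  exists al.+1; split => //.
  exists (fun a : Zp_pow p al.+1 => (f [ffun i => a (lift ord_max i)], a ord_max)).
  split; [|split].
  - move=> a b [] /finj eqf eqm; apply/ffunP => j.
    have := unliftP ord_max j; case => [i ->|-> //].
    by move/ffunP: eqf => /(_ i); rewrite !ffunE.
  - apply/setP => -[g h]; rewrite /= in_setX in_setT andbT.
    apply/imsetP/idP.
      by move=> [a _ [-> _]]; rewrite -fim; apply/imsetP; eexists; first exact: in_setT.
    rewrite -fim => /imsetP [b _ ->].
    exists [ffun j => if unlift ord_max j is Some i then b i else h]; first by rewrite in_setT.
    congr (_, _); last by rewrite ffunE unlift_none.
    by congr f; apply/ffunP => i; rewrite !ffunE liftK.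
  - move=> a b; congr (_, _); last by rewrite ffunE.
    rewrite /= -fhom.
    by congr f; apply/ffunP => i; rewrite !ffunE.
exists act'; split.
  split; [|split].
  - by move=> y; rewrite /act' /= a1 /rot expr0 mul1r addrC subrK rP_oP.
  - move=> [g1 h1] [g2 h2]; rewrite /= !in_setX /= !in_setT !andbT => g1G g2G y.
    rewrite /act' /= oP_rP // zP_rP // aM //; congr rP.
    have zp2 : z ^+ (Zp_trunc p).+2 = 1 by rewrite Zp_cast.
    rewrite /rot (expr_mod _ zp2) exprD; ring.
  - move=> [g h]; rewrite /= in_setX in_setT andbT => gG y y'.
    rewrite !edist_Ssq; congr Num.sqrt.
    rewrite !(Ssq_split' _ _ kn) !oP_rP // !zP_rP //; congr (_ + _).
      exact/edist_eq_Ssq/aiso.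
    have -> : rot h (zP k y) - rot h (zP k y') = z ^+ h * (zP k y - zP k y') by rewrite /rot; ring.
    by rewrite Normc.normcM ncX nz expr1n mul1r.
exists (rP k x0 0) => _ [x [c [Xx [hc ->]]]].
have [g gG hg] := hx0 x Xx.
case: hc => ->.
  exists (g, 1%g); first by rewrite /= in_setX gG in_setT.
  rewrite /act' /= oP_rP // zP_rP // -hg incl_rP //; congr rP.
  by rewrite /rot expr0 mul1r addrC subrK.
exists (g, (@Ordinal (Zp_trunc p).+2 1 erefl : 'Z_p)); first by rewrite /= in_setX gG in_setT.
rewrite /act' /= oP_rP // zP_rP // -hg incl_rP //; congr rP.
have -> : rot 1 0 = cc * (1 - z) by rewrite /rot; ring.
by rewrite /cc divfK.
Qed.
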